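(* Let $G$ be a topological group with identity $e$, equipped with its left uniformity. If $U\subseteq G\times G$ belongs to the left uniformity and is an equivalence relation on $G$, then $A=\bigcap_{g\in G} g\,U[g^{-1}]$ is an open subgroup of $G$ with $A_L\subseteq U$. Consequently the sets $A_L$, $A$ ranging over the open subgroups of $G$, form a base for the uniformity $\mathcal U_{eq}$ associated to the left uniformity, and the following are equivalent: (i) $G$ is uniformly $0$-dimensional with respect to the left uniformity; (ii) $G$ is strongly $0$-dimensional at $e$ with respect to the left uniformity; (iii) $G$ is strongly $0$-dimensional with respect to the left uniformity; (iv) the open subgroups of $G$ form a local base for the topology of $G$ at $e$. The same holds with the right uniformity and $A_R$.
   Context: A topological group is a group with a topology making multiplication $G\times G\to G$ and inversion continuous. For $A\subseteq G$: $A_L=\{(x,y): x^{-1}y\in A\}$, $A_R=\{(x,y): yx^{-1}\in A\}$; for $U\subseteq G\times G$, $U[x]=\{y:(x,y)\in U\}$. The left (resp. right) uniformity of $G$ is the uniformity having base $\{W_L: W \text{ open}, e\in W\}$ (resp. $\{W_R\}$); a uniformity on $X$ is a nonempty collection of subsets of $X\times X$ containing the diagonal, closed under transposition, finite intersections and supersets, and such that each member contains $V*V=\{(x,z):\exists y,(x,y),(y,z)\in V\}$ for some member $V$. $\mathcal U_{eq}$ is the uniformity with base the members of the given uniformity that are equivalence relations. $A,B$ are uniformly separated if some member $U$ contains no $(x,y)$ with $x\in A$, $y\in B$. Uniformly $0$-dimensional: the uniformity has a base of equivalence relations. Strongly $0$-dimensional at $x$: for each open $W\ni x$ there is $V\subseteq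 W$ with $x\in V$ and $V$ uniformly separated from its complement; strongly $0$-dimensional: this holds at every point. *)

(* Defs.v *)
Set Implicit Arguments.

Record TopGroup := {
  carrier :> Type;
  mul : carrier -> carrier -> carrier;
  inv : carrier -> carrier;
  e : carrier;
  is_open : (carrier -> Prop) -> Prop;
  mulA : forall x y z, mul x (mul y z) = mul (mul x y) z;
  mul1g : forall x, mul e x = x;
  mulVg : forall x, mul (inv x) x = e;
  open_full : is_open (fun _ => True);
  open_inter : forall U V, is_open U -> is_open V -> is_open (fun x => U x /\ V x);
  open_union : forall F : (carrier -> Prop) -> Prop,
      (forall W, F W -> is_open W) -> is_open (fun x => exists W, F W /\ W x);
  mul_cont : forall x y W, is_open W -> W (mul x y) ->
      exists U V, is_open U /\ U x /\ is_open V /\ V y /\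
                  (forall a b, U a -> V b -> W (mul a b));
  inv_cont : forall x W, is_open W -> W (inv x) ->
      exists V, is_open V /\ V x /\ (forall y, V y -> W (inv y))
}.

Section Defs.
Variable G : TopGroup.
Notation mulG := (@mul G).
Notation invG := (@inv G).
Notation is_open := (@is_open G).

Definition subrel {X : Type} (U V : X -> X -> Prop) : Prop :=
  forall x y, U x y -> V x y.

Definition subset {X : Type} (A B : X -> Prop) : Prop := forall x, A x -> B x.

Definition is_equivalence {X : Type} (U : X -> X -> Prop) : Prop :=
  (forall x, U x x) /\ (forall x y, U x y -> U y x) /\
  (forall x y z, U x y -> U y z -> U x z).

Definition relL (A : G -> Prop) : G -> G -> Prop := fun x y => A (mulG (invG x) y).
Definition relR (A : G -> Prop) : G -> G -> Prop := fun x y => A (mulG y (invG x)).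

Definition section {X : Type} (U : X -> X -> Prop) (x : X) : X -> Prop := fun y => U x y.

Definition leftUnif (U : G -> G -> Prop) : Prop :=
  exists W, is_open W /\ W (e G) /\ subrel (relL W) U.
Definition rightUnif (U : G -> G -> Prop) : Prop :=
  exists W, is_open W /\ W (e G) /\ subrel (relR W) U.

Definition Ueq {X : Type} (unif : (X -> X -> Prop) -> Prop) (U : X -> X -> Prop) : Prop :=
  exists V, unif V /\ is_equivalence V /\ subrel V U.

Definition subgroup (A : G -> Prop) : Prop :=
  A (e G) /\ (forall x y, A x -> A y -> A (mulG x y)) /\ (forall x, A x -> A (invG x)).

Definition open_subgroup (A : G -> Prop) : Prop := subgroup A /\ is_open A.

Definition capL (U : G -> G -> Prop) : G -> Prop :=
  fun a => forall g : G, exists y, section U (invG g) y /\ a = mulG g y.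
Definition capR (U : G -> G -> Prop) : G -> Prop :=
  fun a => forall g : G, exists y, section U (invG g) y /\ a = mulG y g.

Definition unif_separated {X : Type} (unif : (X -> X -> Prop) -> Prop) (A B : X -> Prop) : Prop :=
  exists U, unif U /\ forall x y, A x -> B y -> ~ U x y.

Definition unif_zero_dim {X : Type} (unif : (X -> X -> Prop) -> Prop) : Prop :=
  forall U, unif U -> exists V, unif V /\ is_equivalence V /\ subrel V U.

Definition strongly_zero_dim_at (unif : (G -> G -> Prop) -> Prop) (x : G) : Prop :=
  forall W, is_open W -> W x ->
    exists V, subset V W /\ V x /\ unif_separated unif V (fun y => ~ V y).

Definition strongly_zero_dim (unif : (G -> G -> Prop) -> Prop) : Prop :=
  forall x, strongly_zero_dim_at unif x.

Definition open_subgroups_local_base : Prop :=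
  forall W, is_open W -> W (e G) -> exists A, open_subgroup A /\ subset A W.

End Defs.

Arguments relL {G}. Arguments relR {G}. Arguments leftUnif {G}. Arguments rightUnif {G}.
Arguments subgroup {G}. Arguments open_subgroup {G}. Arguments capL {G}. Arguments capR {G}.
Arguments strongly_zero_dim_at {G}. Arguments strongly_zero_dim {G}.

(* Main.v *)
Require Import Defs.
From Stdlib Require Import Classical FunctionalExtensionality PropExtensionality.

Section Aux.
Variable G : TopGroup.
Local Notation "x ⋆ y" := (@mul G x y) (at level 40, left associativity).
Local Notation iv := (@inv G).
Local Notation E := (e G).

Lemma mulgV (x : G) : x ⋆ iv x = E.
Proof.
  set (t := x ⋆ iv x).
  assert (Ht : t ⋆ t = t).
  { unfold t. rewrite <- mulA. rewrite (mulA _ (iv x) x (iv x)).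
    rewrite mulVg, mul1g. reflexivity. }
  assert (H1 : t = iv t ⋆ (t ⋆ t)) by (rewrite mulA, mulVg, mul1g; reflexivity).
  rewrite Ht, mulVg in H1. exact H1.
Qed.

Lemma mulg1 (x : G) : x ⋆ E = x.
Proof. rewrite <- (mulVg _ x), mulA, mulgV, mul1g. reflexivity. Qed.

Lemma inv1 : iv E = E.
Proof. rewrite <- (mulg1 (iv E)). apply mulVg. Qed.

Lemma invK (x : G) : iv (iv x) = x.
Proof.
  rewrite <- (mulg1 (iv (iv x))). rewrite <- (mulVg _ x).
  rewrite mulA, mulVg, mul1g. reflexivity.
Qed.

Lemma invM (x y : G) : iv (x ⋆ y) = iv y ⋆ iv x.
Proof.
  assert (H : (x ⋆ y) ⋆ (iv y ⋆ iv x) = E).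
  { rewrite mulA, <- (mulA _ x y), mulgV, mulg1, mulgV. reflexivity. }
  rewrite <- (mul1g _ (iv y ⋆ iv x)), <- (mulVg _ (x ⋆ y)), <- mulA, H, mulg1.
  reflexivity.
Qed.

Lemma mulKg (x y : G) : iv x ⋆ (x ⋆ y) = y.
Proof. rewrite mulA, mulVg, mul1g. reflexivity. Qed.

Lemma mulVKg (x y : G) : x ⋆ (iv x ⋆ y) = y.
Proof. rewrite mulA, mulgV, mul1g. reflexivity. Qed.

Lemma open_local (S : G -> Prop) :
  (forall x, S x -> exists V, is_open G V /\ V x /\ subset V S) -> is_open G S.
Proof.
  intros H.
  assert (Heq : (fun x => exists W, (is_open G W /\ subset W S) /\ W x) = S).
  { apply functional_extensionality; intro x; apply propositional_extensionality.
    split.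
    - intros [W [[_ HW] Wx]]. apply HW, Wx.
    - intros Sx. destruct (H x Sx) as [V [Vo [Vx VS]]]. exists V. tauto. }
  rewrite <- Heq. apply open_union. intros W [Wo _]. exact Wo.
Qed.

Lemma open_ltrans (x : G) (W : G -> Prop) : is_open G W -> is_open G (fun y => W (x ⋆ y)).
Proof.
  intros Wo. apply open_local. intros y Wy.
  destruct (mul_cont G x y W Wo Wy) as [U [V [Uo [Ux [Vo [Vy H]]]]]].
  exists V. split; [exact Vo|]. split; [exact Vy|].
  intros b Vb. apply H; assumption.
Qed.

Lemma open_inv (W : G -> Prop) : is_open G W -> is_open G (fun y => W (iv y)).
Proof.
  intros Wo. apply open_local. intros y Wy.
  destruct (inv_cont G y W Wo Wy) as [V [Vo [Vy H]]].
  exists V. repeat split; auto.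
Qed.

Lemma subgroup_open (A : G -> Prop) (W : G -> Prop) :
  subgroup A -> is_open G W -> W E -> subset W A -> is_open G A.
Proof.
  intros [A1 [AM AV]] Wo We WA. apply open_local. intros a Aa.
  exists (fun y => W (iv a ⋆ y)). split; [apply open_ltrans, Wo|].
  split; [rewrite mulVg; exact We|].
  intros y Wy. rewrite <- (mulVKg a y). apply AM; [exact Aa| apply WA, Wy].
Qed.

Lemma part1 (U : G -> G -> Prop) : leftUnif U -> is_equivalence U ->
      open_subgroup (capL U) /\ subrel (relL (capL U)) U.
Proof.
  intros [W [Wo [We HW]]] [Ur [Us Ut]].
  assert (Heq : capL U = fun a => forall x, U x (x ⋆ a)).
  { apply functional_extensionality; intro a; apply propositional_extensionality.
    unfold capL, section. split.
    - intros H x. destruct (H (iv x)) as [y [Uy ->]].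
      rewrite invK in Uy. rewrite mulVKg. exact Uy.
    - intros H g. exists (iv g ⋆ a). split; [apply H| rewrite mulVKg; reflexivity]. }
  rewrite Heq.
  assert (Hsub : subgroup (fun a => forall x, U x (x ⋆ a))).
  { split; [|split].
    - intros x. rewrite mulg1. apply Ur.
    - intros a b Ha Hb x. rewrite mulA. eapply Ut; [apply Ha| apply Hb].
    - intros a Ha x. apply Us. specialize (Ha (x ⋆ iv a)).
      rewrite <- mulA, mulVg, mulg1 in Ha. exact Ha. }
  split; [split; [exact Hsub|]|].
  - eapply subgroup_open; [exact Hsub | exact Wo | exact We |]. intros w Ww x. apply HW.
    unfold relL. rewrite mulKg. exact Ww.
  - intros x y H. unfold relL in H. specialize (H x). rewrite mulVKg in H. exact H.
Qed.

Lemma ii_iv : strongly_zero_dim_at (@leftUnif G) E -> open_subgroups_local_base G.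
Proof.
  intros H W Wo We. unfold strongly_zero_dim_at, unif_separated, leftUnif in H. destruct (H W Wo We) as [V [VW [Ve [U [[W' [W'o [W'e HW']]] Hsep]]]]].
  assert (Hstep : forall x w, V x -> W' w -> V (x ⋆ w)).
  { intros x w Vx Ww. apply NNPP. intros Hn. apply (Hsep x (x ⋆ w) Vx Hn).
    apply HW'. unfold relL. rewrite mulKg. exact Ww. }
  set (A := fun a => forall g, V g <-> V (g ⋆ a)).
  assert (Hsub : subgroup A).
  { split; [|split].
    - intros g. rewrite mulg1. tauto.
    - intros a b Ha Hb g. rewrite mulA. rewrite (Ha g). apply Hb.
    - intros a Ha g. rewrite (Ha (g ⋆ iv a)). rewrite <- mulA, mulVg, mulg1. tauto. }
  exists A. split; [split; [exact Hsub|]|].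
  - apply subgroup_open with (W := fun w => W' w /\ W' (iv w)); [exact Hsub| | |].
    + apply open_inter; [exact W'o| apply open_inv, W'o].
    + rewrite inv1. tauto.
    + intros w [Hw Hw'] g. split; intros Hg; [apply Hstep; assumption|].
      rewrite <- (mulg1 g), <- (mulgV w), mulA. apply Hstep; assumption.
  - intros a Ha. apply VW. rewrite <- (mul1g _ a). apply (Ha E). exact Ve.
Qed.

Lemma iv_iii : open_subgroups_local_base G -> strongly_zero_dim (@leftUnif G).
Proof.
  intros H x W Wo Wx.
  destruct (H (fun w => W (x ⋆ w))) as [A [[[A1 [AM AV]] Ao] AW]].
  - apply open_ltrans, Wo.
  - rewrite mulg1. exact Wx.
  - exists (fun y => A (iv x ⋆ y)). split; [|split].
    + intros y Ay. specialize (AW _ Ay). simpl in AW. rewrite mulVKg in AW. exact AW.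
    + rewrite mulVg. exact A1.
    + exists (relL A). split.
      * exists A. split; [exact Ao|]. split; [exact A1|]. intros a b h; exact h.
      * intros a b Ha Hb Hab. apply Hb. unfold relL in Hab.
        assert (Hc := AM _ _ Ha Hab). rewrite mulA, <- (mulA _ (iv x) a), mulgV, mulg1 in Hc.
        exact Hc.
Qed.

Lemma iv_i : open_subgroups_local_base G -> unif_zero_dim (@leftUnif G).
Proof.
  intros H U [W [Wo [We HW]]].
  destruct (H W Wo We) as [A [[[A1 [AM AV]] Ao] AW]].
  exists (relL A). split; [|split].
  - exists A. split; [exact Ao|]. split; [exact A1|]. intros a b h; exact h.
  - unfold relL. split; [|split].
    + intros x. rewrite mulVg. exact A1.
    + intros x y Hxy. specialize (AV _ Hxy).
      rewrite invM, invK in AV. exact AV.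
    + intros x y z H1 H2. specialize (AM _ _ H1 H2).
      rewrite mulA, <- (mulA _ (iv x) y), mulgV, mulg1 in AM. exact AM.
  - intros x y Hxy. apply HW. apply AW. exact Hxy.
Qed.

Lemma i_ii : unif_zero_dim (@leftUnif G) -> strongly_zero_dim_at (@leftUnif G) E.
Proof.
  intros H W Wo We.
  destruct (H (relL W)) as [V [HV [[Vr [Vs Vt]] VW]]].
  { exists W. split; [exact Wo|]. split; [exact We|]. intros a b h; exact h. }
  exists (fun y => V E y). split; [|split].
  - intros y Vy. specialize (VW _ _ Vy). unfold relL in VW. rewrite inv1, mul1g in VW. exact VW.
  - apply Vr.
  - exists V. split; [exact HV|]. intros x y Hx Hy Hxy. apply Hy. eapply Vt; eassumption.
Qed.

Lemma left_main :
  ((forall U : G -> G -> Prop, leftUnif U -> is_equivalence U ->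
      open_subgroup (capL U) /\ subrel (relL (capL U)) U) /\
   ((forall A, open_subgroup A -> Ueq (@leftUnif G) (relL A)) /\
    (forall U, Ueq (@leftUnif G) U -> exists A, open_subgroup A /\ subrel (relL A) U)) /\
   ((unif_zero_dim (@leftUnif G) <-> strongly_zero_dim_at (@leftUnif G) (e G)) /\
    (strongly_zero_dim_at (@leftUnif G) (e G) <-> strongly_zero_dim (@leftUnif G)) /\
    (strongly_zero_dim (@leftUnif G) <-> open_subgroups_local_base G))).
Proof.
  split; [exact part1|]. split; [split|].
  - intros A [[A1 [AM AV]] Ao]. exists (relL A). split; [|split].
    + exists A. split; [exact Ao|]. split; [exact A1|]. intros a b h; exact h.
    + unfold relL. split; [|split].
      * intros x. rewrite mulVg. exact A1.
      * intros x y Hxy. specialize (AV _ Hxy). rewrite invM, invK in AV. exact AV.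
      * intros x y z H1 H2. specialize (AM _ _ H1 H2).
        rewrite mulA, <- (mulA _ (iv x) y), mulgV, mulg1 in AM. exact AM.
    + intros a b h; exact h.
  - intros U [V [HV [HVe VU]]]. destruct (part1 V HV HVe) as [HA HAV].
    exists (capL V). split; [exact HA|]. intros x y h. apply VU, HAV, h.
  - assert (iii_ii : strongly_zero_dim (@leftUnif G) -> strongly_zero_dim_at (@leftUnif G) E)
      by (intros H; apply H).
    pose proof i_ii. pose proof ii_iv. pose proof iv_iii. pose proof iv_i.
    split; [|split]; split; auto.
Qed.

End Aux.

Definition opG (G : TopGroup) : TopGroup.
Proof.
  refine (@Build_TopGroup (carrier G) (fun x y => mul G y x) (@inv G) (e G) (@is_open G)
            _ _ _ (open_full G) (open_inter G) (open_union G) _ (inv_cont G)).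
  - intros x y z. symmetry. apply mulA.
  - intros x. apply mulg1.
  - intros x. apply mulgV.
  - intros x y W Wo Wxy. destruct (mul_cont G y x W Wo Wxy) as [U [V [Uo [Uy [Vo [Vx H]]]]]].
    exists V, U. repeat split; auto.
Defined.

Lemma subgroup_op (G : TopGroup) (A : G -> Prop) : @subgroup (opG G) A <-> @subgroup G A.
Proof.
  unfold subgroup; simpl. split; intros [H1 [H2 H3]]; split; auto; split; auto.
Qed.

Lemma open_subgroup_op (G : TopGroup) (A : G -> Prop) : @open_subgroup (opG G) A <-> @open_subgroup G A.
Proof.
  unfold open_subgroup. rewrite subgroup_op. simpl. tauto.
Qed.

Theorem mainTheorem15 (G : TopGroup) :
  (* left uniformity *)
  ((forall U : G -> G -> Prop, leftUnif U -> is_equivalence U ->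
      open_subgroup (capL U) /\ subrel (relL (capL U)) U) /\
   ((forall A, open_subgroup A -> Ueq (@leftUnif G) (relL A)) /\
    (forall U, Ueq (@leftUnif G) U -> exists A, open_subgroup A /\ subrel (relL A) U)) /\
   ((unif_zero_dim (@leftUnif G) <-> strongly_zero_dim_at (@leftUnif G) (e G)) /\
    (strongly_zero_dim_at (@leftUnif G) (e G) <-> strongly_zero_dim (@leftUnif G)) /\
    (strongly_zero_dim (@leftUnif G) <-> open_subgroups_local_base G))) /\
  (* right uniformity *)
  ((forall U : G -> G -> Prop, rightUnif U -> is_equivalence U ->
      open_subgroup (capR U) /\ subrel (relR (capR U)) U) /\
   ((forall A, open_subgroup A -> Ueq (@rightUnif G) (relR A)) /\
    (forall U, Ueq (@rightUnif G) U -> exists A, open_subgroup A /\ subrel (relR A) U)) /\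
   ((unif_zero_dim (@rightUnif G) <-> strongly_zero_dim_at (@rightUnif G) (e G)) /\
    (strongly_zero_dim_at (@rightUnif G) (e G) <-> strongly_zero_dim (@rightUnif G)) /\
    (strongly_zero_dim (@rightUnif G) <-> open_subgroups_local_base G))).
Proof.
  split; [exact (left_main G)|].
  destruct (left_main (opG G)) as [P1 [[P2 P3] [P4 [P5 P6]]]].
  assert (LB : open_subgroups_local_base (opG G) <-> open_subgroups_local_base G).
  { unfold open_subgroups_local_base. split; intros H W Wo We;
      destruct (H W Wo We) as [A [HA HAW]]; exists A; split; auto;
      apply open_subgroup_op; exact HA. }
  split; [|split; [split|]].
  - intros U HU HUe. destruct (P1 U HU HUe) as [HA HAU].
    split; [apply open_subgroup_op; exact HA| exact HAU].
  - intros A HA. apply (P2 A). apply open_subgroup_op; exact HA.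
  - intros U HU. destruct (P3 U HU) as [A [HA HAU]]. exists A.
    split; [apply open_subgroup_op; exact HA| exact HAU].
  - split; [exact P4|]. split; [exact P5|]. rewrite <- LB. exact P6.
Qed.
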